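(* Let $(X,\mathbf R)$ be a symmetric association scheme with $D$ classes which is cometric with respect to the ordering $E_0,\dots,E_D$. Fix $x\in X$ and write $E_k^*=E_k^*(x)$. Let $\chi\in V$ be a code and set $\delta^*=\delta^*(\chi)$, $s_x=s_x(\chi)$. Then for every $0\le k\le D$, $E_k^*\chi$ is a relative $(\delta^*-s_x)$-design with respect to $x$; that is, $E_jE_k^*\chi\in\mathbb C E_j\hat x$ for all $1\le j\le \delta^*-s_x$.
   Context: $(X,\mathbf R)$ is a symmetric association scheme with associate matrices $A_0=I,\dots,A_D$, Bose–Mesner algebra $M$, and primitive idempotents $E_0=|X|^{-1}J,E_1,\dots,E_D$. Cometric (Q-polynomial) with respect to $E_0,\dots,E_D$ means that for each $j$, $E_j$ is a polynomial of degree exactly $j$ in $E_1$ with respect to entrywise (Hadamard) multiplication. $V=\mathbb C^X$ with standard basis $\{\hat y\}$ and standard Hermitian inner product. $E_k^*(x)$ is the diagonal matrix with $(E_k^*(x))_{yy}=(A_k)_{xy}$. A code is a vector $\chi\notin E_0V$ with $\chi\notin E_0^*(z)V$ for all $z\in X$. $\delta^*(\chi)=\min\{j\ne0:E_j\chi\ne0\}$, $s_x(\chi)=|\{i\ne0:E_i^*(x)\chi\ne0\}|$. A vector $\psi$ is a relative $t$-design with respect to $x$ if $E_j\psi$ and $E_j\hat x$ are linearly dependent for all $1\le j\le t$ (vacuous if $t\le 0$). *)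

(* Defs.v *)
From mathcomp Require Import all_boot all_order all_algebra all_field.
Set Implicit Arguments. Unset Strict Implicit. Unset Printing Implicit Defensive.
Import GRing.Theory Num.Theory.
Local Open Scope ring_scope.

(* The point set X is 'I_n; V = C^X is 'cV[algC]_n; relations/idempotents
   are indexed by 'I_D.+1 (index 0 = the trivial relation / E_0). *)

Section AS.
Variables (n D : nat).
Implicit Types (A E : 'I_D.+1 -> 'M[algC]_n) (M : 'M[algC]_n).

Definition in_BM A M := exists c : 'I_D.+1 -> algC, M = \sum_i c i *: A i.

Definition sym_assoc_scheme A :=
  [/\ A ord0 = 1%:M,
      (forall i a b, A i a b = 0 \/ A i a b = 1) /\ \sum_i A i = const_mx 1,
      (forall i, (A i)^T = A i),
      (forall i, A i != 0)
    & (forall i j, in_BM A (A i *m A j))].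

Definition primitive_idempotent A M :=
  [/\ in_BM A M, M *m M = M, M != 0
    & forall F, in_BM A F -> F *m F = F -> F *m M = 0 \/ F *m M = M].

Definition prim_idempotents A E :=
  [/\ (forall j, primitive_idempotent A (E j)),
      (forall i j, i != j -> E i *m E j = 0),
      \sum_j E j = 1%:M
    & E ord0 = (n%:R)^-1 *: const_mx 1].

Definition hpow M (k : nat) : 'M[algC]_n := \matrix_(a, b) (M a b) ^+ k.

Definition cometric E :=
  forall j : 'I_D.+1, exists p : {poly algC},
    size p = j.+1 /\ E j = \sum_(k < size p) p`_k *: hpow (E (inord 1)) k.

Definition Estar A (x : 'I_n) (k : 'I_D.+1) : 'M[algC]_n := diag_mx (row x (A k)).

Definition hat (y : 'I_n) : 'cV[algC]_n := delta_mx y ord0.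

Definition is_code A E (chi : 'cV[algC]_n) :=
  ~ (exists w, chi = E ord0 *m w) /\
  forall z, ~ (exists w, chi = Estar A z ord0 *m w).

Definition deltastar E (chi : 'cV[algC]_n) : nat :=
  \big[minn/D.+1]_(j < D.+1 | (j != 0%N :> nat) && (E j *m chi != 0)) (j : nat).

Definition sx A (x : 'I_n) (chi : 'cV[algC]_n) : nat :=
  #|[set i : 'I_D.+1 | (i != 0%N :> nat) && (Estar A x i *m chi != 0)]|.

Definition lin_dep (u v : 'cV[algC]_n) :=
  exists a b : algC, ((a != 0) || (b != 0)) /\ a *: u + b *: v = 0.

Definition rel_design E (psi : 'cV[algC]_n) (x : 'I_n) (t : nat) :=
  forall j : 'I_D.+1, (1 <= j)%N -> (j <= t)%N -> lin_dep (E j *m psi) (E j *m hat x).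

End AS.

(* Main.v *)
Require Import Defs.
From mathcomp Require Import all_boot all_order all_algebra all_field.
From mathcomp Require Import ring zify.
Set Implicit Arguments. Unset Strict Implicit. Unset Printing Implicit Defensive.
Import GRing.Theory Num.Theory Num.Def.
Local Open Scope ring_scope.

Lemma bigminn_le (I : eqType) (r : seq I) (P : pred I) (F : I -> nat) (x0 : nat) j :
  j \in r -> P j -> (\big[minn/x0]_(i <- r | P i) F i <= F j)%N.
Proof.
elim: r => //= a s IH; rewrite in_cons big_cons => /orP[/eqP<-|js] Pj.
  by rewrite Pj geq_minl.
case: (P a); [apply: leq_trans (geq_minr _ _) _|]; exact: IH.
Qed.

Definition hadm m k (M N : 'M[algC]_(m,k)) : 'M[algC]_(m,k) :=
  \matrix_(a, b) (M a b * N a b).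

Section Proof.
Variables (n D : nat) (A E : 'I_D.+1 -> 'M[algC]_n).
Implicit Types (M N F : 'M[algC]_n).
Hypothesis hA : sym_assoc_scheme A.
Hypothesis hE : prim_idempotents A E.
Hypothesis hC : cometric E.

Lemma A01 i a b : A i a b = 0 \/ A i a b = 1.
Proof. by case: hA => _ [h _] _ _ _; apply: h. Qed.

Lemma Age0 i a b : 0 <= A i a b.
Proof. by case: (A01 i a b) => ->. Qed.

Lemma Asum a b : \sum_i A i a b = 1.
Proof. by case: hA => _ [_ h] _ _ _; rewrite -summxE h mxE. Qed.

Lemma Asym i : (A i)^T = A i.
Proof. by case: hA. Qed.

Lemma A0 : A ord0 = 1%:M.
Proof. by case: hA. Qed.

Lemma Aex a b : exists i, A i a b = 1.
Proof.
case: (pickP (fun i => A i a b == 1)) => [i /eqP hi|h]; first by exists i.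
have : \sum_i A i a b = 0.
  by apply: big1 => i _; case: (A01 i a b) => // e; move: (h i); rewrite e eqxx.
by rewrite Asum => /eqP; rewrite oner_eq0.
Qed.

Lemma Auniq i i' a b : A i a b = 1 -> i' != i -> A i' a b = 0.
Proof.
move=> h1 ne.
have := Asum a b; rewrite (bigD1 i) //= h1 => /(canRL (addKr 1)); rewrite addNr => h.
exact: (psumr_eq0P (fun j _ => Age0 j a b) h).
Qed.

Definition rel a b : 'I_D.+1 := odflt ord0 [pick i | A i a b == 1].

Lemma relP a b : A (rel a b) a b = 1.
Proof.
rewrite /rel; case: pickP => [i /eqP //|] /= h.
by have [i hi] := Aex a b; move: (h i); rewrite hi eqxx.
Qed.

Lemma A_rel i a b : A i a b = (i == rel a b)%:R.
Proof.
case: eqP => [->|/eqP ne]; first by rewrite relP.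
exact: Auniq (relP a b) ne.
Qed.

Lemma rel_sym a b : rel a b = rel b a.
Proof.
have h : ((rel a b == rel b a)%:R : algC) = 1.
  by rewrite -A_rel -[A (rel a b)]Asym mxE relP.
by apply/eqP; move: h; case: eqP => // _ /eqP; rewrite eq_sym oner_eq0.
Qed.

Lemma rel_diag a : rel a a = ord0.
Proof.
have h : ((ord0 == rel a a)%:R : algC) = 1 by rewrite -A_rel A0 mxE eqxx.
by apply/eqP; rewrite eq_sym; move: h; case: eqP => // _ /eqP; rewrite eq_sym oner_eq0.
Qed.

Lemma rel0 a b : rel a b = ord0 -> a = b.
Proof.
move=> h; have := relP a b; rewrite h A0 mxE.
by case: eqP => // _ /eqP; rewrite eq_sym oner_eq0.
Qed.


Lemma sumA_entry (c : 'I_D.+1 -> algC) a b : (\sum_i c i *: A i) a b = c (rel a b).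
Proof.
rewrite summxE (bigD1 (rel a b)) //= big1 => [|i ne]; rewrite mxE ?relP ?mulr1 ?addr0 //.
by rewrite (Auniq (relP a b) ne) mulr0.
Qed.

Lemma BM_entry M : in_BM A M -> forall a b a' b', rel a b = rel a' b' -> M a b = M a' b'.
Proof. by case=> c -> a b a' b' h; rewrite !sumA_entry h. Qed.

Lemma BM_of M : (forall a b a' b', rel a b = rel a' b' -> M a b = M a' b') -> in_BM A M.
Proof.
move=> h.
exists (fun r => if [pick p : 'I_n * 'I_n | rel p.1 p.2 == r] is Some p then M p.1 p.2 else 0).
apply/matrixP => a b; rewrite sumA_entry.
case: pickP => [p /eqP hp|hn]; first by apply: h; rewrite hp.
by move: (hn (a, b)); rewrite eqxx.
Qed.

Lemma BM_sym M : in_BM A M -> M^T = M.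
Proof. by move=> hM; apply/matrixP => a b; rewrite mxE; apply: (BM_entry hM); rewrite rel_sym. Qed.

Lemma BM0 : in_BM A 0.
Proof. by apply: BM_of => *; rewrite !mxE. Qed.

Lemma BMD M N : in_BM A M -> in_BM A N -> in_BM A (M + N).
Proof.
move=> hM hN; apply: BM_of => a b a' b' h; rewrite !mxE.
by rewrite (BM_entry hM h) (BM_entry hN h).
Qed.

Lemma BMZ c M : in_BM A M -> in_BM A (c *: M).
Proof. by move=> hM; apply: BM_of => a b a' b' h; rewrite !mxE (BM_entry hM h). Qed.

Lemma BMA i : in_BM A (A i).
Proof. by apply: BM_of => a b a' b' h; rewrite !A_rel h. Qed.

Lemma BMM M N : in_BM A M -> in_BM A N -> in_BM A (M *m N).
Proof.
case=> c -> [d ->]; rewrite mulmx_suml.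
apply: (big_ind (in_BM A)); [exact: BM0|exact: BMD|] => i _.
rewrite mulmx_sumr; apply: (big_ind (in_BM A)); [exact: BM0|exact: BMD|] => j _.
rewrite -scalemxAl -scalemxAr; do 2!apply: BMZ.
by case: hA => _ _ _ _; apply.
Qed.

Lemma BM_comm M N : in_BM A M -> in_BM A N -> M *m N = N *m M.
Proof.
move=> hM hN; rewrite -(BM_sym (BMM hM hN)) trmx_mul.
by rewrite (BM_sym hM) (BM_sym hN).
Qed.

Lemma E_BM j : in_BM A (E j).
Proof. by case: hE => h _ _ _; case: (h j). Qed.
Lemma E_idem j : E j *m E j = E j.
Proof. by case: hE => h _ _ _; case: (h j). Qed.
Lemma E_neq0 j : E j != 0.
Proof. by case: hE => h _ _ _; case: (h j). Qed.
Lemma E_prim j F : in_BM A F -> F *m F = F -> F *m E j = 0 \/ F *m E j = E j.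
Proof. by case: hE => h _ _ _; case: (h j) => _ _ _; apply. Qed.
Lemma E_orth i j : i != j -> E i *m E j = 0.
Proof. by case: hE => _ h _ _; apply: h. Qed.
Lemma E_sum : \sum_j E j = 1%:M.
Proof. by case: hE. Qed.
Lemma E_sym j : (E j)^T = E j.
Proof. exact: BM_sym (E_BM j). Qed.
Lemma E_symE j a b : E j a b = E j b a.
Proof. by rewrite -{1}E_sym mxE. Qed.

Lemma E_real j : map_mx conjC (E j) = E j.
Proof.
set F := map_mx conjC (E j).
have hF : in_BM A F.
  apply: BM_of => a b a' b' h; rewrite !mxE; congr (_^*).
  exact: (BM_entry (E_BM j) h).
have hFF : F *m F = F by rewrite /F -map_mxM E_idem.
have hFE : F *m E j = E j.
  case: (E_prim j hF hFF) => // h0.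
  have ht : \tr (F *m E j) = 0 by rewrite h0 mxtrace0.
  move: ht; rewrite /mxtrace.
  under eq_bigr => a _ do rewrite mxE.
  move=> ht; case/negP: (E_neq0 j); apply/eqP/matrixP => a b; rewrite mxE.
  have h1 : forall a, 0 <= \sum_b F a b * E j b a.
    move=> a'; apply: sumr_ge0 => b' _; rewrite /F mxE E_symE mulrC.
    exact: mul_conjC_ge0.
  have := psumr_eq0P (fun a _ => h1 a) ht (erefl true) => /(_ a) h2.
  have h3 : forall b, 0 <= F a b * E j b a.
    by move=> b'; rewrite /F mxE E_symE mulrC; exact: mul_conjC_ge0.
  have := psumr_eq0P (fun b _ => h3 b) h2 (erefl true) => /(_ b).
  rewrite /F mxE E_symE mulrC => /eqP; rewrite mul_conjC_eq0 => /eqP.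
  by [].
have hEF : E j *m F = F.
  have := congr1 (map_mx conjC) hFE; rewrite map_mxM.
  have -> : map_mx conjC F = E j by apply/matrixP => a b; rewrite !mxE conjCK.
  by [].
by rewrite -hFE (BM_comm hF (E_BM j)) hEF.
Qed.

Lemma E_realE j a b : (E j a b)^* = E j a b.
Proof. by rewrite -{2}(E_real j) mxE. Qed.

Notation E1 := (E (inord 1)).

Lemma E_poly (j : 'I_D.+1) : exists p : {poly algC}, size p = j.+1 /\ forall a b, E j a b = p.[E1 a b].
Proof.
have [p [hs he]] := hC j; exists p; split => // a b.
by rewrite he summxE horner_coef; apply: eq_bigr => d _; rewrite !mxE.
Qed.

Definition hpoly (r : {poly algC}) : 'M[algC]_n := \matrix_(a, b) r.[E1 a b].

Lemma hpolyE r : hpoly r = \sum_(d < size r) r`_d *: hpow E1 d.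
Proof.
apply/matrixP => a b; rewrite summxE mxE horner_coef.
by apply: eq_bigr => d _; rewrite !mxE.
Qed.

Definition Span k M := exists c : 'I_D.+1 -> algC,
  M = \sum_i c i *: E i /\ forall i : 'I_D.+1, (k < i)%N -> c i = 0.

Lemma Span0 k : Span k 0.
Proof.
exists (fun _ => 0); split => //.
by rewrite big1 // => i _; rewrite scale0r.
Qed.

Lemma SpanD k M N : Span k M -> Span k N -> Span k (M + N).
Proof.
case=> c [-> hc] [d [-> hd]]; exists (fun i => c i + d i); split.
  by rewrite -big_split; apply: eq_bigr => i _; rewrite scalerDl.
by move=> i hi; rewrite hc // hd // addr0.
Qed.

Lemma SpanZ k a M : Span k M -> Span k (a *: M).
Proof.
case=> c [-> hc]; exists (fun i => a * c i); split.
  by rewrite scaler_sumr; apply: eq_bigr => i _; rewrite scalerA.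
by move=> i hi; rewrite hc // mulr0.
Qed.

Lemma Span_sum k (I : finType) (P : pred I) (F : I -> 'M[algC]_n) :
  (forall i, P i -> Span k (F i)) -> Span k (\sum_(i | P i) F i).
Proof. by move=> h; apply: big_ind => //; [exact: Span0|exact: SpanD]. Qed.

Lemma Span_mono k k' M : (k <= k')%N -> Span k M -> Span k' M.
Proof.
move=> le [c [-> hc]]; exists c; split => // i hi; apply: hc.
exact: leq_ltn_trans hi.
Qed.

Lemma SpanE k (i : 'I_D.+1) : (i <= k)%N -> Span k (E i).
Proof.
move=> hi; exists (fun j => (j == i)%:R); split.
  rewrite (bigD1 i) //= eqxx scale1r big1 ?addr0 // => j /negbTE ->.
  by rewrite scale0r.
move=> j hj; case: eqP => // e; move: hj; rewrite e ltnNge hi.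
by [].
Qed.

Lemma hpow_span k : (k <= D)%N -> Span k (hpow E1 k).
Proof.
elim/ltn_ind: k => k IH kD.
have kD' : (k < D.+1)%N by [].
have [p [hs he]] := hC (inord k).
rewrite inordK // in hs.
have pk : p`_k != 0.
  have : lead_coef p != 0 by rewrite lead_coef_eq0 -size_poly_eq0 hs.
  by rewrite lead_coefE hs.
move: he; rewrite hs big_ord_recr /= => he.
have -> : hpow E1 k = (p`_k)^-1 *: (E (inord k) - \sum_(d < k) p`_d *: hpow E1 d).
  by rewrite he addrAC subrr add0r scalerA mulVf // scale1r.
apply: SpanZ; apply: SpanD.
  by apply: SpanE; rewrite inordK.
rewrite -scaleN1r; apply: SpanZ; apply: Span_sum => d _; apply: SpanZ.
apply: (Span_mono (ltnW (ltn_ord d))); apply: IH => //.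
by apply: leq_trans kD; apply: ltnW.
Qed.

Lemma Span_mulE k M (l : 'I_D.+1) : Span k M -> (k < l)%N -> M *m E l = 0.
Proof.
case=> c [-> hc] hl; rewrite mulmx_suml big1 // => i _.
rewrite -scalemxAl; case: (eqVneq i l) => [->|ne].
  by rewrite hc // scale0r.
by rewrite E_orth // scaler0.
Qed.

Lemma Span_Emul k M (j : 'I_D.+1) : Span k M -> exists be, E j *m M = be *: E j.
Proof.
case=> c [-> _]; exists (c j); rewrite mulmx_sumr (bigD1 j) //= big1.
  by rewrite addr0 -scalemxAr E_idem.
by move=> i ne; rewrite -scalemxAr E_orth ?scaler0 // eq_sym.
Qed.

Lemma hpoly_span (r : {poly algC}) k : (size r <= k.+1)%N -> (k <= D)%N -> Span k (hpoly r).
Proof.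
move=> hr kD; rewrite hpolyE; apply: Span_sum => d _; apply: SpanZ.
have dk : (d <= k)%N by rewrite -ltnS; apply: leq_trans hr.
exact: (Span_mono dk (hpow_span (leq_trans dk kD))).
Qed.

Lemma hpoly_mulE (r : {poly algC}) (l : 'I_D.+1) : (size r <= l)%N -> hpoly r *m E l = 0.
Proof.
move=> hr; rewrite hpolyE mulmx_suml big1 // => d _.
have dl : (d < l)%N := leq_trans (ltn_ord d) hr.
rewrite -scalemxAl (@Span_mulE d) ?scaler0 //.
apply: hpow_span; rewrite -ltnS; exact: ltn_trans dl (ltn_ord l).
Qed.

Lemma had_E (i j l : 'I_D.+1) : (i + j < l)%N -> hadm (E i) (E j) *m E l = 0.
Proof.
move=> h; have [p [hp ep]] := E_poly i; have [p' [hp' ep']] := E_poly j.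
have -> : hadm (E i) (E j) = hpoly (p * p').
  by apply/matrixP => a b; rewrite !mxE ep ep' hornerM.
apply: hpoly_mulE; apply: leq_trans (size_mul_leq _ _) _.
by rewrite hp hp' addSn /= addnS.
Qed.

Definition T (i j l : 'I_D.+1) :=
  \sum_w \sum_w' E i w w' * E j w w' * E l w w'.

Lemma T0 (i j l : 'I_D.+1) : (i + j < l)%N -> T i j l = 0.
Proof.
move=> h; have := congr1 mxtrace (had_E h); rewrite mxtrace0 /mxtrace => <-.
apply: eq_bigr => w _; rewrite mxE; apply: eq_bigr => w' _.
by rewrite mxE (E_symE l w' w).
Qed.

Lemma swap3 (F : 'I_n -> 'I_n -> 'I_n -> algC) :
  \sum_a \sum_b \sum_c F a b c = \sum_b \sum_c \sum_a F a b c.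
Proof. by rewrite exchange_big; apply: eq_bigr => b _; rewrite exchange_big. Qed.

Lemma krein0 (i j l : 'I_D.+1) : T i j l = 0 ->
  forall v y z, \sum_w E l v w * (E i w y * E j w z) = 0.
Proof.
move=> hT.
pose f y z v := \sum_w E l v w * (E i w y * E j w z).
have freal y z v : (f y z v)^* = f y z v.
  rewrite /f rmorph_sum; apply: eq_bigr => w _.
  by rewrite !rmorphM /= !E_realE.
have fge0 y z v : 0 <= f y z v * f y z v.
  by rewrite -{2}freal; exact: mul_conjC_ge0.
have e2 y z : \sum_v f y z v * f y z v =
   \sum_w \sum_w' E l w w' * ((E i w y * E i w' y) * (E j w z * E j w' z)).
  transitivity (\sum_v \sum_w \sum_w'
     (E l v w * E l v w') * ((E i w y * E i w' y) * (E j w z * E j w' z))).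
    apply: eq_bigr => v _; rewrite /f mulr_suml; apply: eq_bigr => w _.
    by rewrite mulr_sumr; apply: eq_bigr => w' _; ring.
  rewrite swap3; apply: eq_bigr => w _; apply: eq_bigr => w' _.
  rewrite -mulr_suml; congr (_ * _).
  rewrite -{3}(E_idem l) mxE; apply: eq_bigr => v _.
  by rewrite E_symE.
have e3 : \sum_y \sum_z \sum_v f y z v * f y z v = T i j l.
  transitivity (\sum_y \sum_z \sum_w \sum_w'
     E l w w' * ((E i w y * E i w' y) * (E j w z * E j w' z))).
    by apply: eq_bigr => y _; apply: eq_bigr => z _; rewrite e2.
  transitivity (\sum_y \sum_w \sum_w' \sum_z
     E l w w' * ((E i w y * E i w' y) * (E j w z * E j w' z))).
    by apply: eq_bigr => y _; rewrite swap3.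
  rewrite swap3 /T; apply: eq_bigr => w _; apply: eq_bigr => w' _.
  transitivity (\sum_y E l w w' * (E i w y * E i w' y) * \sum_z E j w z * E j w' z).
    apply: eq_bigr => y _; rewrite mulr_sumr; apply: eq_bigr => z _; ring.
  rewrite -mulr_suml -mulr_sumr.
  have ->: \sum_y E i w y * E i w' y = E i w w'.
    by rewrite -{3}(E_idem i) mxE; apply: eq_bigr => y _; rewrite (E_symE i w' y).
  have ->: \sum_z E j w z * E j w' z = E j w w'.
    by rewrite -{3}(E_idem j) mxE; apply: eq_bigr => z _; rewrite (E_symE j w' z).
  ring.
move=> v y z; rewrite hT in e3.
have g1 y0 : 0 <= \sum_z0 \sum_v0 f y0 z0 v0 * f y0 z0 v0.
  by apply: sumr_ge0 => z0 _; apply: sumr_ge0 => v0 _.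
have := psumr_eq0P (fun y0 _ => g1 y0) e3 (erefl true) => /(_ y) e4.
have g2 z0 : 0 <= \sum_v0 f y z0 v0 * f y z0 v0 by apply: sumr_ge0 => v0 _.
have := psumr_eq0P (fun z0 _ => g2 z0) e4 (erefl true) => /(_ z) e5.
have := psumr_eq0P (fun v0 _ => fge0 y z v0) e5 (erefl true) => /(_ v) /eqP.
rewrite mulf_eq0 orbb => /eqP.
by [].
Qed.

Lemma krein (i j l : 'I_D.+1) (a b : 'cV[algC]_n) : T i j l = 0 ->
  E l *m hadm (E i *m a) (E j *m b) = 0.
Proof.
move=> hT; apply/matrixP => v c; rewrite !mxE.
transitivity (\sum_y \sum_z a y c * b z c * \sum_w E l v w * (E i w y * E j w z)).
  transitivity (\sum_w \sum_y \sum_z a y c * b z c * (E l v w * (E i w y * E j w z))).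
    apply: eq_bigr => w _; rewrite !mxE mulr_suml mulr_sumr; apply: eq_bigr => y _.
    rewrite mulr_sumr mulr_sumr; apply: eq_bigr => z _; ring.
  rewrite swap3; apply: eq_bigr => y _; apply: eq_bigr => z _.
  by rewrite mulr_sumr.
by apply: big1 => y _; apply: big1 => z _; rewrite (krein0 hT) mulr0.
Qed.

Definition ev (j r : 'I_D.+1) : algC :=
  if [pick p : 'I_n * 'I_n | rel p.1 p.2 == r] is Some p then E j p.1 p.2 else 0.

Lemma evE j a b : E j a b = ev j (rel a b).
Proof.
rewrite /ev; case: pickP => [p /eqP hp|hn]; last by move: (hn (a, b)); rewrite eqxx.
by apply: (BM_entry (E_BM j)); rewrite hp.
Qed.

Lemma rel_ex r : exists a b, rel a b = r.
Proof.
case: hA => _ _ _ hnz _; have := hnz r.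
case: (pickP (fun p : 'I_n * 'I_n => A r p.1 p.2 != 0)) => [[a b] /= h _|hn].
  exists a, b; case: (A01 r a b) => e; first by rewrite e eqxx in h.
  have := A_rel r a b; rewrite e; case: eqP => [->//|_ /eqP].
  by rewrite /= oner_eq0.
move/negP; case; apply/eqP/matrixP => a b; rewrite mxE.
by move: (hn (a, b)) => /= /negbFE /eqP.
Qed.

Lemma ev_poly (j r : 'I_D.+1) : exists p : {poly algC}, forall r0, ev j r0 = p.[ev (inord 1) r0].
Proof.
have [p [_ hp]] := E_poly j; exists p => r0.
have [a [b <-]] := rel_ex r0.
by rewrite -!evE hp.
Qed.

Lemma ev_distinct (r r' : 'I_D.+1) : r != r' -> ev (inord 1) r != ev (inord 1) r'.
Proof.
move=> ne; apply/negP => /eqP h.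
have hj j : ev j r = ev j r'.
  by have [p hp] := ev_poly j r; rewrite !hp h.
pose C := \matrix_(j, r0) ev j r0.
have : \det C == 0.
  rewrite -det_tr; apply/eqP; apply: (determinant_alternate ne) => j.
  by rewrite !mxE hj.
case/det0P => d dnz hd.
have hs : \sum_j d 0 j *: E j = 0.
  apply/matrixP => a b; rewrite summxE [RHS]mxE.
  transitivity ((d *m C) 0 (rel a b)); last by rewrite hd mxE.
  by rewrite mxE; apply: eq_bigr => j _; rewrite !mxE evE.
case/negP: dnz; apply/eqP/matrixP => z k; rewrite (ord1 z) mxE.
have := congr1 (mulmx (E k)) hs.
rewrite mulmx_sumr (bigD1 k) //= big1; last first.
  by move=> i ne'; rewrite -scalemxAr E_orth ?scaler0 // eq_sym.
rewrite addr0 -scalemxAr E_idem mulmx0 => /eqP; rewrite scaler_eq0 (negbTE (E_neq0 k)) orbF.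
by move/eqP.
Qed.

Lemma lagrange (S : {set 'I_D.+1}) (k : 'I_D.+1) : k \in S ->
  exists Q : {poly algC}, size Q = #|S| /\
    forall i, i \in S -> Q.[ev (inord 1) i] = (i == k)%:R.
Proof.
move=> kS.
pose P := \prod_(i <- enum (S :\ k)) ('X - (ev (inord 1) i)%:P).
have sP : size P = #|S| by rewrite size_prod_XsubC -cardE (cardsD1 k S) kS.
have P0 i : i \in S -> i != k -> P.[ev (inord 1) i] = 0.
  move=> iS ik; rewrite horner_prod (big_rem i) /=; last by rewrite mem_enum !inE ik.
  by rewrite hornerXsubC subrr mul0r.
have c0 : P.[ev (inord 1) k] != 0.
  rewrite horner_prod prodf_seq_neq0; apply/allP => i; rewrite mem_enum !inE.
  case/andP => ik _; rewrite hornerXsubC subr_eq0; apply: ev_distinct.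
  by rewrite eq_sym.
exists ((P.[ev (inord 1) k])^-1 *: P); split.
  by rewrite size_scale ?invr_eq0.
move=> i iS; rewrite hornerZ; case: (eqVneq i k) => [->|ik].
  by rewrite mulVf.
by rewrite (P0 i) // mulr0.
Qed.

Lemma colhat M (x y : 'I_n) (c : 'I_1) : (M *m hat x) y c = M y x.
Proof.
rewrite mxE (bigD1 x) //= big1 => [|z ne]; rewrite mxE.
  by rewrite (ord1 c) !eqxx mulr1 addr0.
by rewrite (negbTE ne) mulr0.
Qed.

Lemma hadm_suml (I : finType) (P : pred I) (F : I -> 'cV[algC]_n) v :
  hadm (\sum_(i | P i) F i) v = \sum_(i | P i) hadm (F i) v.
Proof.
apply/matrixP => a b; rewrite mxE !summxE mulr_suml.
by apply: eq_bigr => i _; rewrite mxE.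
Qed.

Lemma hadm_sumr (I : finType) (P : pred I) (F : I -> 'cV[algC]_n) v :
  hadm v (\sum_(i | P i) F i) = \sum_(i | P i) hadm v (F i).
Proof.
apply/matrixP => a b; rewrite mxE !summxE mulr_sumr.
by apply: eq_bigr => i _; rewrite mxE.
Qed.

Lemma hadmZl c (u v : 'cV[algC]_n) : hadm (c *: u) v = c *: hadm u v.
Proof. by apply/matrixP => a b; rewrite !mxE mulrA. Qed.

Lemma hadm0r (u : 'cV[algC]_n) : hadm u 0 = 0.
Proof. by apply/matrixP => a b; rewrite !mxE mulr0. Qed.

Lemma Tperm (i j l : 'I_D.+1) : T i j l = T i l j.
Proof. by apply: eq_bigr => w _; apply: eq_bigr => w' _; rewrite mulrAC. Qed.

Lemma Estar_entry x k (chi : 'cV[algC]_n) y c :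
  (Estar A x k *m chi) y c = A k x y * chi y c.
Proof. by rewrite /Estar mul_diag_mx !mxE. Qed.

Lemma main (x : 'I_n) (chi : 'cV[algC]_n) (k : 'I_D.+1) :
  rel_design E (Estar A x k *m chi) x (deltastar E chi - sx A x chi).
Proof.
move=> j j1 jt.
set ds := deltastar E chi in jt.
set S := [set i : 'I_D.+1 | (i != 0%N :> nat) && (Estar A x i *m chi != 0)].
have hs : sx A x chi = #|S| by [].
rewrite hs in jt.
suff [be hbe] : exists be, E j *m (Estar A x k *m chi) = be *: (E j *m hat x).
  exists 1, (- be); split; first by rewrite oner_eq0.
  by rewrite scale1r hbe scaleNr addrN.
have hds (m : 'I_D.+1) : (m != 0%N :> nat) -> (m < ds)%N -> E m *m chi = 0.
  move=> m0 mds; apply/eqP; apply/negP => /negP hne.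
  have : (ds <= m)%N.
    by apply: bigminn_le; [exact: mem_index_enum | rewrite m0 hne].
  by rewrite leqNgt mds.
have sD : (#|S| <= D)%N.
  have : S \subset [set~ ord0].
    apply/subsetP => i; rewrite !inE => /andP[h _]; exact: h.
  by move/subset_leq_card; rewrite cardsC1 card_ord.
have jsds : (j + #|S| <= ds)%N by lia.
case: (eqVneq (Estar A x k *m chi) 0) => [->|hk].
  by exists 0; rewrite mulmx0 scale0r.
case: (eqVneq k ord0) => [k0|k0].
  exists (chi x 0); rewrite scalemxAr; congr (_ *m _).
  apply/matrixP => y c; rewrite Estar_entry k0 A0 !mxE (ord1 c).
  case: (eqVneq x y) => [<-|ne]; first by rewrite !eqxx mul1r mulr1.
  by rewrite mul0r /= mulr0.
have kS : k \in S by rewrite inE k0 hk.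
have S0 : (0 < #|S|)%N by apply/card_gt0P; exists k.
have [Q [sQ hQ]] := lagrange kS.
have [q qdef] : {q : 'cV[algC]_n | q = hpoly Q *m hat x} by exists (hpoly Q *m hat x).
have qE y c : q y c = Q.[E1 y x] by rewrite qdef colhat mxE.
have spQ : Span #|S|.-1 (hpoly Q).
  apply: hpoly_span; first by rewrite sQ prednK.
  exact: leq_trans (leq_pred _) sD.
have key : Estar A x k *m chi = hadm q chi - (q x 0 * chi x 0) *: hat x.
  apply/matrixP => y c; rewrite (ord1 c) Estar_entry !mxE.
  case: (eqVneq y x) => [->|yx].
    by rewrite A_rel rel_diag (negbTE k0) !eqxx mul0r mulr1 subrr.
  rewrite /= mulr0 subr0.
  case: (eqVneq (chi y 0) 0) => [->|cy]; first by rewrite !mulr0.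
  have ry : rel x y \in S.
    rewrite inE; apply/andP; split.
      apply/negP => /eqP h; case/eqP: yx; apply/esym/rel0; exact: val_inj.
    apply/negP => /eqP /matrixP /(_ y 0); rewrite Estar_entry relP mul1r mxE.
    by move/eqP; rewrite (negbTE cy).
  by rewrite qE evE rel_sym hQ // A_rel eq_sym mulrC.
rewrite key mulmxBr -scalemxAr.
suff [be hbe] : exists be, E j *m hadm q chi = be *: (E j *m hat x).
  by exists (be - q x 0 * chi x 0); rewrite hbe scalerBl.
have chiE : chi = \sum_m E m *m chi by rewrite -mulmx_suml E_sum mul1mx.
rewrite chiE hadm_sumr mulmx_sumr (bigD1 ord0) //= big1 ?addr0; last first.
  move=> m m0.
  case: (ltnP m ds) => hm.
    by rewrite hds // hadm0r mulmx0.
  have [b [hb hb0]] := spQ.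
  rewrite qdef hb mulmx_suml hadm_suml mulmx_sumr big1 // => i _.
  rewrite -scalemxAl hadmZl -scalemxAr.
  case: (leqP i #|S|.-1) => hi; last by rewrite hb0 // scale0r.
  rewrite (krein _ _ (_ : T i m j = 0)) ?scaler0 //.
  rewrite Tperm; apply: T0; lia.
have hE0 : E ord0 = (n%:R)^-1 *: const_mx 1 by case: hE.
have h0 : hadm q (E ord0 *m chi) = ((n%:R)^-1 * \sum_a chi a 0) *: q.
  apply/matrixP => y c; rewrite (ord1 c) !mxE hE0 mulrC mulr_sumr.
  by congr (_ * _); apply: eq_bigr => a _; rewrite !mxE mulr1.
have [be hbe] := Span_Emul j spQ.
rewrite h0 -scalemxAr qdef mulmxA hbe -scalemxAl scalerA.
by eexists.
Qed.


End Proof.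

Theorem theorem4p3 (n D : nat) (A E : 'I_D.+1 -> 'M[algC]_n) (x : 'I_n)
    (chi : 'cV[algC]_n) :
  sym_assoc_scheme A -> prim_idempotents A E -> cometric E -> is_code A E chi ->
  forall k : 'I_D.+1,
    rel_design E (Estar A x k *m chi) x (deltastar E chi - sx A x chi).
Proof.
move=> hA hE hC _ k; exact (@main n D A E hA hE hC x chi k).
Qed.
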